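(* Let $b\in\mathbb{C}\setminus\{1\}$, and let $a_n(q)$ be the sequence of polynomials in $q$ defined recursively by \[ a_0(q)=0,\qquad a_n(q) = b^n + \left(1-q^{n-1}\right)a_{n-1}(q) \quad \text{for } n\in\mathbb{N}. \] Then, for $q\in\mathbb{C}$ with $|q|<\min(|b|^{-1},1)$, the limit below exists and \[ \lim_{n\rightarrow\infty}\left( \sum_{1\le\ell\le n} b^\ell - a_n(q)\right) =\lim_{n\rightarrow\infty}\left( \frac{b-b^{n+1}}{1-b} - a_n(q) \right) = \frac{b}{1-b} - \frac{b\,(q;q)_\infty}{(b;q)_\infty}. \]
   Context: For $n\in\mathbb{N}_0\cup\{\infty\}$, $(a;q)_n := \prod_{j=0}^{n-1}(1-aq^j)$. If $b=0$, interpret $|b|^{-1}=\infty$. *)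

(* Defs.v *)
From Stdlib Require Import Reals.
From Coquelicot Require Export Coquelicot.
Open Scope C_scope.

Fixpoint a_seq (b q : C) (n : nat) : C :=
  match n with
  | O => 0
  | S m => b ^ (S m) + (1 - q ^ m) * a_seq b q m
  end.

Fixpoint qpoch (a q : C) (n : nat) : C :=
  match n with
  | O => 1
  | S m => qpoch a q m * (1 - a * q ^ m)
  end.

Fixpoint geom_sum (b : C) (n : nat) : C :=
  match n with
  | O => 0
  | S m => geom_sum b m + b ^ (S m)
  end.

Definition cv_C (u : nat -> C) (l : C) : Prop :=
  filterlim u eventually (locally l).

(* Main.v *)
Require Import Defs.
From Stdlib Require Import Reals Lra Lia Classical.
From Coquelicot Require Import Coquelicot.
Open Scope C_scope.


Definition lim_r (u : nat -> C) (l : C) : Prop :=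
  exists f : nat -> R, (forall n, (Cmod (u n - l) <= f n)%R) /\ is_lim_seq f 0.

Lemma exp_le_mono (x y : R) : (x <= y)%R -> (exp x <= exp y)%R.
Proof.
  intros H. destruct (Rle_lt_or_eq_dec _ _ H) as [H1|H1].
  - left. now apply exp_increasing.
  - subst. lra.
Qed.

Lemma le_of_lim (z B : R) (h : nat -> R) :
  (forall n, (z <= B + h n)%R) -> is_lim_seq h 0 -> (z <= B)%R.
Proof.
  intros H Hh.
  assert (Hc := is_lim_seq_const z).
  assert (Hs := is_lim_seq_plus' (fun _ => B) h B 0 (is_lim_seq_const B) Hh).
  assert (Hle := is_lim_seq_le _ _ _ _ H Hc Hs). simpl in Hle. lra.
Qed.

Lemma lim_geo (c rho : R) : (0 <= rho < 1)%R ->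
  is_lim_seq (fun n => (c * rho ^ n)%R) 0.
Proof.
  intros Hr.
  assert (H := is_lim_seq_scal_l _ c _ (is_lim_seq_geom rho ltac:(rewrite Rabs_pos_eq; lra))).
  rewrite Rbar_mult_0_r in H. exact H.
Qed.

Lemma lim_plus0 (f g : nat -> R) : is_lim_seq f 0 -> is_lim_seq g 0 ->
  is_lim_seq (fun n => (f n + g n)%R) 0.
Proof.
  intros Hf Hg. assert (H := is_lim_seq_plus' f g 0 0 Hf Hg).
  rewrite Rplus_0_r in H. exact H.
Qed.

Lemma lim_r_cv (u : nat -> C) (l : C) : lim_r u l -> cv_C u l.
Proof.
  intros [f [Hf Hl]]. unfold cv_C. apply filterlim_locally. intros eps.
  apply is_lim_seq_spec in Hl. destruct (Hl eps) as [N HN].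
  exists N. intros n Hn. apply (norm_compat1 (V := C_NormedModule)).
  specialize (HN n Hn). specialize (Hf n).
  change (Cmod (u n - l) < eps)%R.
  rewrite Rminus_0_r in HN. apply Rabs_def2 in HN. lra.
Qed.

Lemma Cminus_eq0 (x y : C) : x - y = 0 -> x = y.
Proof. intros H. replace x with ((x - y) + y) by ring. rewrite H. ring. Qed.

Lemma lim_r_unique (u : nat -> C) (l1 l2 : C) : lim_r u l1 -> lim_r u l2 -> l1 = l2.
Proof.
  intros [f [Hf Hfl]] [g [Hg Hgl]].
  apply Cminus_eq0, Cmod_eq_0. apply Rle_antisym; [|apply Cmod_ge_0].
  apply (le_of_lim _ 0 (fun n => f n + g n)%R); [|now apply lim_plus0].
  intros n. replace (l1 - l2) with (- (u n - l1) + (u n - l2)) by ring.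
  eapply Rle_trans; [apply Cmod_triangle|]. rewrite Cmod_opp.
  specialize (Hf n); specialize (Hg n); lra.
Qed.

Lemma lim_r_bound (u : nat -> C) (l c : C) (B : R) :
  lim_r u l -> (forall n, (Cmod (u n - c) <= B)%R) -> (Cmod (l - c) <= B)%R.
Proof.
  intros [f [Hf Hfl]] H. apply (le_of_lim _ B f); auto.
  intros n. replace (l - c) with (- (u n - l) + (u n - c)) by ring.
  eapply Rle_trans; [apply Cmod_triangle|]. rewrite Cmod_opp.
  specialize (Hf n); specialize (H n); lra.
Qed.

Lemma lim_r_of_geo (u : nat -> C) (l : C) (c rho : R) : (0 <= rho < 1)%R ->
  (forall n, (Cmod (u n - l) <= c * rho ^ n)%R) -> lim_r u l.
Proof. intros Hr H. exists (fun n => (c * rho ^ n)%R). split; auto. now apply lim_geo. Qed.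

Lemma lim_r_shift (u : nat -> C) (l : C) (k : nat) : lim_r u l -> lim_r (fun m => u (m + k)%nat) l.
Proof.
  intros [f [Hf Hl]]. exists (fun m => f (m + k)%nat). split; auto.
  now apply is_lim_seq_incr_n.
Qed.

Lemma lim_r_ext (u v : nat -> C) (l : C) : (forall n, u n = v n) -> lim_r u l -> lim_r v l.
Proof.
  intros E [f [Hf Hl]]. exists f. split; auto. intros n. rewrite <- E. auto.
Qed.

Lemma lim_r_scal (u : nat -> C) (l c : C) : lim_r u l -> lim_r (fun n => c * u n) (c * l).
Proof.
  intros [f [Hf Hl]]. exists (fun n => Cmod c * f n)%R. split.
  - intros n. replace (c * u n - c * l) with (c * (u n - l)) by ring.
    rewrite Cmod_mult. apply Rmult_le_compat_l; auto. apply Cmod_ge_0.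
  - assert (H := is_lim_seq_scal_l _ (Cmod c) _ Hl). rewrite Rbar_mult_0_r in H. exact H.
Qed.

Lemma cv_bound (v : nat -> C) (l c : C) (B : R) (N : nat) :
  cv_C v l -> (forall m, (N <= m)%nat -> (Cmod (v m - c) <= B)%R) -> (Cmod (l - c) <= B)%R.
Proof.
  intros Hv H. destruct (Rle_dec (Cmod (l - c)) B) as [?|Hn]; auto. exfalso.
  set (d := ((Cmod (l - c) - B) / 2 / norm_factor (V := C_NormedModule))%R).
  assert (Hnf := norm_factor_gt_0 (V := C_NormedModule)).
  assert (Hd : (0 < d)%R). { unfold d. apply Rdiv_lt_0_compat; lra. }
  apply filterlim_locally with (eps := mkposreal d Hd) in Hv.
  destruct Hv as [M HM].
  specialize (HM (max M N) ltac:(lia)). specialize (H (max M N) ltac:(lia)).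
  apply (norm_compat2 (V := C_NormedModule)) in HM.
  change (Cmod (v (max M N) - l) < norm_factor (V := C_NormedModule) * d)%R in HM.
  unfold d in HM. replace (norm_factor (V := C_NormedModule) * ((Cmod (l - c) - B) / 2 / norm_factor (V := C_NormedModule)))%R
    with ((Cmod (l - c) - B) / 2)%R in HM by (field; lra).
  assert (Ht : (Cmod (l - c) <= Cmod (v (max M N) - l) + Cmod (v (max M N) - c))%R).
  { replace (l - c) with (- (v (max M N) - l) + (v (max M N) - c)) by ring.
    eapply Rle_trans; [apply Cmod_triangle|]. rewrite Cmod_opp. lra. }
  lra.
Qed.

Lemma conv_incr (u w : nat -> C) (c rho : R) : (0 <= rho < 1)%R ->
  (forall n, u (S n) = u n + w n) -> (forall n, (Cmod (w n) <= c * rho ^ n)%R) ->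
  exists l, lim_r u l.
Proof.
  intros Hr Hu Hw.
  assert (Hc : (0 <= c)%R). { specialize (Hw 0%nat). simpl in Hw. assert (H := Cmod_ge_0 (w 0%nat)). lra. }
  assert (Hex : ex_series w).
  { apply (ex_series_le w (fun n => c * rho ^ n)%R).
    - intros n. exact (Hw n).
    - exact (ex_series_scal_l c (fun n => rho ^ n)%R (ex_series_geom rho ltac:(rewrite Rabs_pos_eq; lra))). }
  destruct Hex as [L HL].
  assert (Hsum : forall m, u (S m) = u 0%nat + sum_n w m).
  { induction m.
    - rewrite sum_O. apply Hu.
    - rewrite sum_Sn, Hu, IHm. unfold plus; simpl. ring. }
  assert (Hdiff : forall n m, (Cmod (u (n + m)%nat - u n) <= c / (1 - rho) * rho ^ n * (1 - rho ^ m))%R).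
  { intros n m. induction m.
    - rewrite Nat.add_0_r. replace (u n - u n) with (RtoC 0) by ring. rewrite Cmod_0. simpl. lra.
    - rewrite Nat.add_succ_r, Hu.
      replace (u (n + m)%nat + w (n + m)%nat - u n) with ((u (n + m)%nat - u n) + w (n + m)%nat) by ring.
      eapply Rle_trans; [apply Cmod_triangle|].
      eapply Rle_trans; [apply Rplus_le_compat; [exact IHm | apply Hw]|].
      rewrite pow_add. right. simpl. field. lra. }
  exists (u 0%nat + L). apply (lim_r_of_geo _ _ (c / (1 - rho)) rho Hr).
  intros n.
  assert (H : (Cmod (L - (u n - u 0%nat)) <= c / (1 - rho) * rho ^ n)%R).
  { apply (cv_bound (sum_n w) L (u n - u 0%nat) _ n HL).
    intros m Hm. replace (sum_n w m - (u n - u 0%nat)) with (u (S m) - u n) by (rewrite Hsum; ring).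
    replace (S m) with (n + (S m - n))%nat by lia.
    eapply Rle_trans; [apply Hdiff|].
    assert (0 <= rho ^ (S m - n))%R by (apply pow_le; lra).
    assert (0 <= c / (1 - rho) * rho ^ n)%R.
    { apply Rmult_le_pos; [apply Rdiv_le_0_compat; lra | apply pow_le; lra]. }
    rewrite Rmult_minus_distr_l, Rmult_1_r.
    assert (0 <= c / (1 - rho) * rho ^ n * rho ^ (S m - n))%R by (apply Rmult_le_pos; auto).
    lra. }
  replace (u n - (u 0%nat + L)) with (- (L - (u n - u 0%nat))) by ring.
  rewrite Cmod_opp. exact H.
Qed.

Lemma one_minus_le (y : C) : (Cmod (1 - y) <= 1 + Cmod y)%R.
Proof.
  eapply Rle_trans; [apply Cmod_triangle|]. rewrite Cmod_opp, Cmod_1. lra.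
Qed.

Lemma one_minus_ge (y : C) : (1 - Cmod y <= Cmod (1 - y))%R.
Proof.
  assert (H := Cmod_triangle (1 - y) y). replace (1 - y + y) with (RtoC 1) in H by ring.
  rewrite Cmod_1 in H. lra.
Qed.

Lemma pow_le1 (r : R) (n : nat) : (0 <= r <= 1)%R -> (r ^ n <= 1)%R.
Proof. intros H. rewrite <- (pow1 n). apply pow_incr. lra. Qed.

Lemma qpoch_bound (x q : C) (n : nat) : (Cmod q < 1)%R ->
  (Cmod (qpoch x q n) <= exp (Cmod x * (1 - Cmod q ^ n) / (1 - Cmod q)))%R.
Proof.
  intros Hq. assert (Hq0 := Cmod_ge_0 q). assert (Hx0 := Cmod_ge_0 x).
  induction n; simpl.
  - rewrite Cmod_1. replace (Cmod x * (1 - 1) / (1 - Cmod q))%R with 0%R by (field; lra).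
    rewrite exp_0. lra.
  - rewrite Cmod_mult.
    eapply Rle_trans; [apply Rmult_le_compat; [apply Cmod_ge_0|apply Cmod_ge_0|exact IHn|apply one_minus_le]|].
    rewrite Cmod_mult, Cmod_pow.
    eapply Rle_trans; [apply Rmult_le_compat_l; [left; apply exp_pos|apply exp_ineq1_le]|].
    rewrite <- exp_plus. right. f_equal. field. lra.
Qed.

Section Rec.
Variable r : R.
Hypothesis Hr : (0 <= r < 1)%R.

Definition sR (n : nat) : R := ((1 - r ^ n) / (1 - r))%R.
Definition KR : R := exp (/ (1 - r)).

Lemma PR_le (n : nat) : (exp (sR n) <= KR)%R.
Proof.
  apply exp_le_mono. unfold sR. assert (0 <= r ^ n)%R by (apply pow_le; lra).
  unfold Rdiv. rewrite <- (Rmult_1_l (/ (1 - r))) at 2. apply Rmult_le_compat_r; [left; apply Rinv_0_lt_compat; lra|lra].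
Qed.

Lemma PR_ge1 (n : nat) : (1 <= exp (sR n))%R.
Proof.
  rewrite <- exp_0. apply exp_le_mono. unfold sR.
  assert (r ^ n <= 1)%R by (apply pow_le1; lra).
  apply Rdiv_le_0_compat; lra.
Qed.

Lemma PR_step (n : nat) : ((1 + r ^ n) * exp (sR n) <= exp (sR (S n)))%R.
Proof.
  replace (sR (S n)) with (sR n + r ^ n)%R by (unfold sR; simpl; field; lra).
  rewrite exp_plus, Rmult_comm. apply Rmult_le_compat_l; [left; apply exp_pos|apply exp_ineq1_le].
Qed.

Lemma rec_bound (al be ga : nat -> R) :
  (forall n, al (S n) <= be n + (1 + r ^ n) * al n)%R ->
  (forall n, ga n + be n <= ga (S n))%R ->
  (al 0%nat <= ga 0%nat)%R -> (forall n, 0 <= be n)%R -> (forall n, 0 <= ga n)%R ->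
  forall n, (al n <= KR * ga n)%R.
Proof.
  intros H1 H2 H3 Hb Hg.
  assert (Hm : forall n, (al n <= exp (sR n) * ga n)%R).
  { induction n.
    - unfold sR. simpl. replace ((1 - 1) / (1 - r))%R with 0%R by (field; lra).
      rewrite exp_0. lra.
    - eapply Rle_trans; [apply H1|].
      assert (E1 := PR_step n). assert (E2 := PR_ge1 n). assert (E3 := PR_ge1 (S n)).
      assert (0 <= r ^ n)%R by (apply pow_le; lra).
      specialize (Hb n). specialize (Hg n). specialize (H2 n).
      apply Rle_trans with (be n + (1 + r ^ n) * (exp (sR n) * ga n))%R.
      { apply Rplus_le_compat_l. apply Rmult_le_compat_l; lra. }
      apply Rle_trans with (exp (sR (S n)) * be n + exp (sR (S n)) * ga n)%R.
      { apply Rplus_le_compat.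
        - rewrite <- (Rmult_1_l (be n)) at 1. apply Rmult_le_compat_r; lra.
        - rewrite <- Rmult_assoc. apply Rmult_le_compat_r; lra. }
      rewrite <- Rmult_plus_distr_l. apply Rmult_le_compat_l; [lra|]. lra. }
  intros n. eapply Rle_trans; [apply Hm|]. apply Rmult_le_compat_r; auto. apply PR_le.
Qed.
End Rec.

Definition Psi (x q : C) (n : nat) : C := geom_sum x n - a_seq x q n.

Lemma a_S x q n : a_seq x q (S n) = x ^ (S n) + (1 - q ^ n) * a_seq x q n.
Proof. reflexivity. Qed.
Lemma qpoch_S x q n : qpoch x q (S n) = qpoch x q n * (1 - x * q ^ n).
Proof. reflexivity. Qed.

Lemma Psi_S x q n : Psi x q (S n) = Psi x q n + q ^ n * a_seq x q n.
Proof. unfold Psi. rewrite a_S. simpl. ring. Qed.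

Lemma Cpow_mult (x y : C) n : (x * y) ^ n = x ^ n * y ^ n.
Proof. induction n; simpl. ring. rewrite IHn. ring. Qed.

Lemma neq1 (y : C) : (Cmod y < 1)%R -> 1 - y <> 0.
Proof.
  intros H E. assert (y = 1) by (symmetry; apply Cminus_eq0; exact E). subst.
  rewrite Cmod_1 in H. lra.
Qed.

Lemma a_bound (x q : C) (M : R) : (Cmod q < 1)%R -> (1 < M)%R -> (Cmod x <= M)%R ->
  forall n, (Cmod (a_seq x q n) <= KR (Cmod q) * (M ^ (S n) / (M - 1)))%R.
Proof.
  intros Hq HM Hx. assert (Hq0 := Cmod_ge_0 q). assert (Hx0 := Cmod_ge_0 x).
  apply (rec_bound (Cmod q) ltac:(lra) (fun n => Cmod (a_seq x q n)) (fun n => M ^ (S n))%R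
           (fun n => M ^ (S n) / (M - 1))%R).
  - intros n. rewrite a_S.
    eapply Rle_trans; [apply Cmod_triangle|]. rewrite Cmod_mult, Cmod_pow.
    apply Rplus_le_compat.
    + apply pow_incr. lra.
    + apply Rmult_le_compat_r; [apply Cmod_ge_0|]. eapply Rle_trans; [apply one_minus_le|].
      rewrite Cmod_pow. lra.
  - intros n. right. simpl. field. lra.
  - simpl. rewrite Cmod_0. apply Rdiv_le_0_compat; lra.
  - intros n. apply pow_le. lra.
  - intros n. apply Rdiv_le_0_compat; [apply pow_le|]; lra.
Qed.

Lemma D_bound (x q : C) : (Cmod q < 1)%R -> (Cmod x < 1)%R ->
  forall n, (Cmod (a_seq x q (S n) - x * qpoch q q n) <= KR (Cmod q) * (Cmod x ^ 2 / (1 - Cmod x)))%R.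
Proof.
  intros Hq Hx. assert (Hq0 := Cmod_ge_0 q). assert (Hx0 := Cmod_ge_0 x).
  intros n.
  eapply Rle_trans.
  { apply (rec_bound (Cmod q) ltac:(lra) (fun n => Cmod (a_seq x q (S n) - x * qpoch q q n))
           (fun n => Cmod x ^ (S (S n)))%R
           (fun n => Cmod x ^ 2 * (1 - Cmod x ^ n) / (1 - Cmod x))%R).
    - intros m. rewrite (a_S x q (S m)), qpoch_S.
      replace (x ^ S (S m) + (1 - q ^ S m) * a_seq x q (S m) - x * (qpoch q q m * (1 - q * q ^ m)))
        with (x ^ S (S m) + (1 - q ^ S m) * (a_seq x q (S m) - x * qpoch q q m)) by (simpl; ring).
      eapply Rle_trans; [apply Cmod_triangle|]. rewrite Cmod_mult, Cmod_pow.
      apply Rplus_le_compat_l. apply Rmult_le_compat_r; [apply Cmod_ge_0|].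
      eapply Rle_trans; [apply one_minus_le|]. rewrite Cmod_pow. simpl.
      assert (0 <= Cmod q ^ m)%R by (apply pow_le; lra).
      assert (Cmod q * Cmod q ^ m <= Cmod q ^ m)%R.
      { rewrite <- (Rmult_1_l (Cmod q ^ m)) at 2. apply Rmult_le_compat_r; lra. }
      lra.
    - intros m. right. simpl. field. lra.
    - cbv beta. replace (a_seq x q 1 - x * qpoch q q 0) with (RtoC 0) by (simpl; ring). rewrite Cmod_0. right. simpl. field. lra.
    - intros m. apply pow_le. lra.
    - intros m. assert (Cmod x ^ m <= 1)%R by (apply pow_le1; lra).
      apply Rdiv_le_0_compat; [apply Rmult_le_pos; [apply pow_le|]|]; lra. }
  apply Rmult_le_compat_l; [left; apply exp_pos|].
  assert (0 <= Cmod x ^ n)%R by (apply pow_le; lra).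
  assert (0 <= Cmod x ^ 2)%R by (apply pow_le; lra).
  unfold Rdiv. apply Rmult_le_compat_r; [left; apply Rinv_0_lt_compat; lra|]. nra.
Qed.

Lemma Psi_lim (x q : C) : (Cmod q < 1)%R -> (Cmod q * Cmod x < 1)%R -> exists l, lim_r (Psi x q) l.
Proof.
  intros Hq Hqx. assert (Hq0 := Cmod_ge_0 q). assert (Hx0 := Cmod_ge_0 x).
  set (m := Rmax 1 (Cmod x)).
  assert (Hm1 : (1 <= m)%R) by apply Rmax_l.
  assert (Hmx : (Cmod x <= m)%R) by apply Rmax_r.
  assert (Hqm : (Cmod q * m < 1)%R).
  { unfold m. destruct (Rle_dec 1 (Cmod x)).
    - rewrite Rmax_right; lra.
    - rewrite Rmax_left; lra. }
  set (M := (m + (1 - Cmod q * m) / 2)%R).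
  assert (HM : (1 < M)%R) by (unfold M; lra).
  assert (HqM : (Cmod q * M < 1)%R) by (unfold M; nra).
  apply (conv_incr _ (fun n => q ^ n * a_seq x q n) (KR (Cmod q) * M / (M - 1)) (Cmod q * M)).
  - split; [apply Rmult_le_pos; lra|lra].
  - intros n. apply Psi_S.
  - intros n. rewrite Cmod_mult, Cmod_pow.
    eapply Rle_trans.
    { apply Rmult_le_compat_l; [apply pow_le; lra|]. apply (a_bound x q M); [lra|lra|unfold M; lra]. }
    right. rewrite Rpow_mult_distr. simpl. field. lra.
Qed.

Lemma Psi_est (x q qq l : C) : (Cmod q < 1)%R -> (Cmod x < 1)%R ->
  lim_r (qpoch q q) qq -> lim_r (Psi x q) l ->
  (Cmod (l - x * (1 - qq)) <= KR (Cmod q) * (Cmod x ^ 2 / (1 - Cmod x)) / (1 - Cmod q))%R.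
Proof.
  intros Hq Hx [g [Hg Hgl]] [f [Hf Hfl]].
  assert (Hq0 := Cmod_ge_0 q). assert (Hx0 := Cmod_ge_0 x).
  set (B := (KR (Cmod q) * (Cmod x ^ 2 / (1 - Cmod x)))%R).
  assert (HB : (0 <= B)%R).
  { unfold B. apply Rmult_le_pos; [left; apply exp_pos|].
    apply Rdiv_le_0_compat; [apply pow_le|]; lra. }
  assert (HE : forall n, (Cmod (Psi x q (S n) - x * (1 - qpoch q q n)) <= B * (1 - Cmod q ^ n) / (1 - Cmod q))%R).
  { induction n.
    - replace (Psi x q 1 - x * (1 - qpoch q q 0)) with (RtoC 0) by (unfold Psi; simpl; ring).
      rewrite Cmod_0. right. simpl. field. lra.
    - rewrite (Psi_S x q (S n)), qpoch_S.
      replace (Psi x q (S n) + q ^ S n * a_seq x q (S n) - x * (1 - qpoch q q n * (1 - q * q ^ n)))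
        with ((Psi x q (S n) - x * (1 - qpoch q q n)) + q ^ S n * (a_seq x q (S n) - x * qpoch q q n))
        by (simpl; ring).
      eapply Rle_trans; [apply Cmod_triangle|]. rewrite Cmod_mult, Cmod_pow.
      assert (HD := D_bound x q Hq Hx n). fold B in HD.
      assert (0 <= Cmod q ^ S n)%R by (apply pow_le; lra).
      assert (Hid : (B * (1 - Cmod q ^ S n) / (1 - Cmod q) - (B * (1 - Cmod q ^ n) / (1 - Cmod q) + Cmod q ^ S n * B)
                     = B * Cmod q ^ n * (1 - Cmod q))%R) by (simpl; field; lra).
      assert (0 <= B * Cmod q ^ n * (1 - Cmod q))%R.
      { apply Rmult_le_pos; [apply Rmult_le_pos; [lra|apply pow_le; lra]|lra]. }
      assert (Cmod q ^ S n * Cmod (a_seq x q (S n) - x * qpoch q q n) <= Cmod q ^ S n * B)%R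
        by (apply Rmult_le_compat_l; lra).
      lra. }
  apply (le_of_lim _ _ (fun n => f (S n) + Cmod x * g n)%R).
  - intros n.
    replace (l - x * (1 - qq)) with (- (Psi x q (S n) - l) + (Psi x q (S n) - x * (1 - qpoch q q n)) + x * - (qpoch q q n - qq)) by ring.
    eapply Rle_trans; [apply Cmod_triangle|].
    eapply Rle_trans; [apply Rplus_le_compat_r, Cmod_triangle|].
    rewrite !Cmod_opp, Cmod_mult, Cmod_opp.
    specialize (Hf (S n)). specialize (Hg n). specialize (HE n).
    assert (B * (1 - Cmod q ^ n) / (1 - Cmod q) <= B / (1 - Cmod q))%R.
    { assert (0 <= Cmod q ^ n)%R by (apply pow_le; lra). unfold Rdiv.
      apply Rmult_le_compat_r; [left; apply Rinv_0_lt_compat; lra|nra]. }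
    assert (Cmod x * Cmod (qpoch q q n - qq) <= Cmod x * g n)%R by (apply Rmult_le_compat_l; lra).
    fold B. lra.
  - apply lim_plus0.
    + now apply (is_lim_seq_incr_1 f 0).
    + assert (H := is_lim_seq_scal_l _ (Cmod x) _ Hgl). rewrite Rbar_mult_0_r in H. exact H.
Qed.

Lemma a_shift (x q : C) n : a_seq (x * q) q (S n) = q * (1 - x) * a_seq x q (S n) + q * x ^ (S (S n)).
Proof.
  induction n.
  - simpl. ring.
  - rewrite (a_S (x * q) q (S n)), IHn, (a_S x q (S n)), Cpow_mult.
    change (q ^ S (S n)) with (q * q ^ S n).
    change (x ^ S (S (S n))) with (x * x ^ S (S n)). ring.
Qed.

Lemma geom_id (y : C) n : (1 - y) * geom_sum y n = y - y ^ (S n).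
Proof.
  induction n.
  - simpl. ring.
  - change (geom_sum y (S n)) with (geom_sum y n + y ^ S n). change (y ^ S (S n)) with (y * y ^ S n).
    replace ((1 - y) * (geom_sum y n + y ^ S n)) with ((1 - y) * geom_sum y n + (1 - y) * y ^ S n) by ring.
    rewrite IHn. ring.
Qed.

Lemma Psi_shift (x q : C) n :
  Psi (x * q) q (S n) = geom_sum (x * q) (S n) - q * x + q * (1 - x) * Psi x q (S n).
Proof.
  unfold Psi. rewrite a_shift.
  replace (q * (1 - x) * (geom_sum x (S n) - a_seq x q (S n)))
    with (q * ((1 - x) * geom_sum x (S n)) - q * (1 - x) * a_seq x q (S n)) by ring.
  rewrite geom_id. ring.
Qed.

Lemma geom_err (y : C) m : (Cmod y < 1)%R ->
  (Cmod (geom_sum y m - y / (1 - y)) <= Cmod y ^ (S m) / (1 - Cmod y))%R.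
Proof.
  intros Hy. assert (Hn := neq1 y Hy).
  replace (geom_sum y m - y / (1 - y)) with (((1 - y) * geom_sum y m - y) / (1 - y)) by (field; auto).
  rewrite geom_id.
  replace (y - y ^ S m - y) with (- (y ^ S m)) by ring.
  rewrite Cmod_div by auto. rewrite Cmod_opp, Cmod_pow.
  assert (H1 := one_minus_ge y).
  unfold Rdiv. apply Rmult_le_compat_l; [apply pow_le, Cmod_ge_0|].
  apply Rinv_le_contravar; lra.
Qed.

Lemma Psi_func (x q lx lxq : C) : (Cmod q < 1)%R -> (Cmod q * Cmod x < 1)%R ->
  lim_r (Psi x q) lx -> lim_r (Psi (x * q) q) lxq ->
  lxq = x * q / (1 - x * q) - q * x + q * (1 - x) * lx.
Proof.
  intros Hq Hqx Hx Hxq.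
  assert (Hq0 := Cmod_ge_0 q). assert (Hx0 := Cmod_ge_0 x).
  assert (Hy : (Cmod (x * q) < 1)%R) by (rewrite Cmod_mult; lra).
  assert (Hy0 := Cmod_ge_0 (x * q)).
  apply (lim_r_unique (fun n => Psi (x * q) q (S n))).
  - apply (lim_r_ext (fun n => Psi (x * q) q (n + 1)%nat)).
    + intros n. now rewrite Nat.add_1_r.
    + now apply lim_r_shift.
  - destruct Hx as [f [Hf Hfl]].
    exists (fun n => Cmod (x * q) ^ 2 / (1 - Cmod (x * q)) * Cmod (x * q) ^ n + Cmod (q * (1 - x)) * f (S n))%R.
    split.
    + intros n. rewrite Psi_shift.
      replace (geom_sum (x * q) (S n) - q * x + q * (1 - x) * Psi x q (S n) - (x * q / (1 - x * q) - q * x + q * (1 - x) * lx))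
        with ((geom_sum (x * q) (S n) - x * q / (1 - x * q)) + q * (1 - x) * (Psi x q (S n) - lx)) by ring.
      eapply Rle_trans; [apply Cmod_triangle|]. rewrite (Cmod_mult (q * (1 - x))).
      apply Rplus_le_compat.
      * eapply Rle_trans; [apply geom_err; auto|]. right. simpl. field. lra.
      * apply Rmult_le_compat_l; [apply Cmod_ge_0|]. apply Hf.
    + apply lim_plus0.
      * apply lim_geo. lra.
      * assert (H := is_lim_seq_scal_l _ (Cmod (q * (1 - x))) _ (proj1 (is_lim_seq_incr_1 f 0) Hfl)).
        rewrite Rbar_mult_0_r in H. exact H.
Qed.

Lemma qpoch_lim (x q : C) : (Cmod q < 1)%R -> exists l, lim_r (qpoch x q) l.
Proof.
  intros Hq. assert (Hq0 := Cmod_ge_0 q). assert (Hx0 := Cmod_ge_0 x).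
  apply (conv_incr _ (fun n => - (qpoch x q n * (x * q ^ n))) (exp (Cmod x / (1 - Cmod q)) * Cmod x) (Cmod q)).
  - lra.
  - intros n. rewrite qpoch_S. ring.
  - intros n. rewrite Cmod_opp, !Cmod_mult, Cmod_pow.
    rewrite <- Rmult_assoc. apply Rmult_le_compat_r; [apply pow_le; lra|].
    apply Rmult_le_compat_r; [lra|].
    eapply Rle_trans; [apply qpoch_bound; lra|]. apply exp_le_mono.
    assert (0 <= Cmod q ^ n)%R by (apply pow_le; lra).
    unfold Rdiv. apply Rmult_le_compat_r; [left; apply Rinv_0_lt_compat; lra|nra].
Qed.

Lemma qpoch_nz (x q : C) : (forall j, x * q ^ j <> 1) -> forall n, qpoch x q n <> 0.
Proof.
  intros H n. induction n.
  - simpl. intros E. apply C1_nz. exact E.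
  - rewrite qpoch_S. apply Cmult_neq_0; auto.
    intros E. apply (H n). symmetry. apply Cminus_eq0. exact E.
Qed.

Lemma one_minus_exp (s : R) : (0 <= s <= 1/2)%R -> (exp (-2 * s) <= 1 - s)%R.
Proof.
  intros Hs.
  replace (-2 * s)%R with (- (2 * s))%R by ring. rewrite exp_Ropp.
  assert (H1 := exp_ineq1_le (2 * s)).
  apply Rle_trans with (/ (1 + 2 * s))%R.
  - apply Rinv_le_contravar; lra.
  - apply Rmult_le_reg_l with (1 + 2 * s)%R; [lra|]. rewrite Rinv_r by lra. nra.
Qed.

Lemma lim_nonzero (x q l : C) : (Cmod q < 1)%R -> (forall j, x * q ^ j <> 1) ->
  lim_r (qpoch x q) l -> l <> 0.
Proof.
  intros Hq Hj [f [Hf Hfl]].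
  assert (Hq0 := Cmod_ge_0 q). assert (Hx0 := Cmod_ge_0 x).
  set (r := Cmod q). set (t := Cmod x).
  destruct (pow_lt_1_zero r ltac:(unfold r; rewrite Rabs_pos_eq; lra) (/ (2 * (t + 1)))%R)
    as [J HJ].
  { apply Rinv_0_lt_compat. unfold t; lra. }
  assert (Hs : forall n, (J <= n)%nat -> (0 <= t * r ^ n <= 1/2)%R).
  { intros n Hn. specialize (HJ n Hn). rewrite Rabs_pos_eq in HJ by (apply pow_le; unfold r; lra).
    assert (0 <= r ^ n)%R by (apply pow_le; unfold r; lra).
    split; [apply Rmult_le_pos; unfold t; lra|].
    assert ((t + 1) * r ^ n <= (t + 1) * / (2 * (t + 1)))%R by (apply Rmult_le_compat_l; [unfold t; lra | left; exact HJ]).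
    replace ((t + 1) * / (2 * (t + 1)))%R with (1/2)%R in H0 by (field; unfold t; lra).
    unfold t in *; nra. }
  assert (Hlow : forall m, (Cmod (qpoch x q J) * exp (-2 * t * r ^ J * (1 - r ^ m) / (1 - r)) <= Cmod (qpoch x q (J + m)))%R).
  { induction m.
    - rewrite Nat.add_0_r. simpl. replace (-2 * t * r ^ J * (1 - 1) / (1 - r))%R with 0%R by (field; unfold r; lra).
      rewrite exp_0. lra.
    - rewrite Nat.add_succ_r, qpoch_S, Cmod_mult.
      specialize (Hs (J + m)%nat ltac:(lia)).
      assert (E1 := one_minus_exp _ Hs).
      assert (E2 : (1 - t * r ^ (J + m) <= Cmod (1 - x * q ^ (J + m)))%R).
      { eapply Rle_trans; [|apply one_minus_ge]. rewrite Cmod_mult, Cmod_pow. unfold t, r. lra. }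
      assert (E3 : (0 <= exp (-2 * (t * r ^ (J + m))))%R) by (left; apply exp_pos).
      eapply Rle_trans; [|apply Rmult_le_compat; [apply Rmult_le_pos; [apply Cmod_ge_0|left; apply exp_pos]|exact E3|exact IHm|lra]].
      rewrite (Rmult_assoc (Cmod (qpoch x q J))), <- exp_plus. right. f_equal. f_equal. rewrite pow_add. simpl. field. unfold r; lra. }
  assert (Hnz := qpoch_nz x q Hj J).
  apply Cmod_gt_0 in Hnz.
  set (d := (Cmod (qpoch x q J) * exp (-2 * t * r ^ J / (1 - r)))%R).
  assert (Hd : (0 < d)%R) by (unfold d; apply Rmult_lt_0_compat; [lra|apply exp_pos]).
  assert (Hdl : (d <= Cmod l)%R).
  { apply (le_of_lim _ _ (fun m => f (m + J)%nat)).
    - intros m. specialize (Hlow m). specialize (Hf (J + m)%nat).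
      assert (d <= Cmod (qpoch x q J) * exp (-2 * t * r ^ J * (1 - r ^ m) / (1 - r)))%R.
      { unfold d. apply Rmult_le_compat_l; [lra|]. apply exp_le_mono.
        assert (0 <= r ^ m)%R by (apply pow_le; unfold r; lra).
        assert (0 <= r ^ J)%R by (apply pow_le; unfold r; lra).
        assert (0 <= t * r ^ J)%R by (apply Rmult_le_pos; unfold t; lra).
        unfold Rdiv. apply Rmult_le_compat_r; [left; apply Rinv_0_lt_compat; unfold r; lra|nra]. }
      assert (Cmod (qpoch x q (J + m)) <= Cmod l + Cmod (qpoch x q (J + m) - l))%R.
      { replace (qpoch x q (J + m)) with (l + (qpoch x q (J + m) - l)) at 1 by ring. apply Cmod_triangle. }
      rewrite Nat.add_comm. lra.
    - now apply (is_lim_seq_incr_n f J 0). }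
  intros E. rewrite E, Cmod_0 in Hdl. lra.
Qed.
Notation CZ := (RtoC 0).

Lemma key_q0 (b qq bq P0 : C) : b <> 1 ->
  lim_r (qpoch CZ CZ) qq -> lim_r (qpoch b CZ) bq -> lim_r (Psi b CZ) P0 ->
  bq * (b / (1 - b) - P0) = b * qq.
Proof.
  intros Hb Hqq Hbq HP.
  assert (Hb1 : 1 - b <> 0) by (intros E; apply Hb; symmetry; apply Cminus_eq0; exact E).
  assert (HPsi : forall n, Psi b CZ n = CZ).
  { induction n. unfold Psi. simpl. ring.
    rewrite Psi_S, IHn. destruct n; simpl; ring. }
  assert (E1 : P0 = 0).
  { apply (lim_r_unique (Psi b CZ)); auto. apply (lim_r_of_geo _ _ 0 0); [lra|].
    intros n. rewrite HPsi. replace (CZ - CZ) with (RtoC 0) by ring. rewrite Cmod_0. lra. }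
  assert (HQ : forall n, qpoch CZ CZ n = 1).
  { induction n. reflexivity. rewrite qpoch_S, IHn. ring. }
  assert (E2 : qq = 1).
  { apply (lim_r_unique (qpoch CZ CZ)); auto. apply (lim_r_of_geo _ _ 0 0); [lra|].
    intros n. rewrite HQ. replace (RtoC 1 - 1) with (RtoC 0) by ring. rewrite Cmod_0. lra. }
  assert (HB : forall n, qpoch b CZ (S n) = 1 - b).
  { induction n. simpl. ring. rewrite (qpoch_S b CZ (S n)), IHn. simpl. ring. }
  assert (E3 : bq = 1 - b).
  { apply (lim_r_unique (fun n => qpoch b CZ (S n))).
    - apply (lim_r_ext (fun n => qpoch b CZ (n + 1)%nat)); [intros n; now rewrite Nat.add_1_r|].
      now apply lim_r_shift.
    - apply (lim_r_of_geo _ _ 0 0); [lra|].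
      intros n. rewrite HB. replace (1 - b - (1 - b)) with (RtoC 0) by ring. rewrite Cmod_0. lra. }
  rewrite E1, E2, E3. field. auto.
Qed.

Lemma key_qnz (b q qq bq P0 : C) : b <> 1 -> (Cmod q < 1)%R -> (Cmod q * Cmod b < 1)%R -> q <> 0 ->
  lim_r (qpoch q q) qq -> lim_r (qpoch b q) bq -> lim_r (Psi b q) P0 ->
  bq * (b / (1 - b) - P0) = b * qq.
Proof.
  intros Hb Hq Hqb Hq0 Hqq Hbq HP0.
  assert (Hr : (0 < Cmod q)%R) by (apply Cmod_gt_0; auto).
  assert (Hb0 := Cmod_ge_0 b).
  set (r := Cmod q) in *.
  set (G0 := b / (1 - b) - P0).
  assert (Hx : forall N, (Cmod q * Cmod (b * q ^ N) < 1)%R).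
  { intros N. rewrite Cmod_mult, Cmod_pow. fold r.
    assert (r ^ N <= 1)%R by (apply pow_le1; lra).
    assert (0 <= r ^ N)%R by (apply pow_le; lra).
    assert (r * (Cmod b * r ^ N) <= r * Cmod b)%R.
    { apply Rmult_le_compat_l; [lra|]. rewrite <- (Rmult_1_r (Cmod b)) at 2. apply Rmult_le_compat_l; lra. }
    lra. }
  assert (Hsmall : forall N, (Cmod (b * q ^ S N) <= r * Cmod b)%R).
  { intros N. rewrite Cmod_mult, Cmod_pow. fold r. change (r ^ S N)%R with (r * r ^ N)%R.
    assert (r ^ N <= 1)%R by (apply pow_le1; lra).
    assert (0 <= r ^ N)%R by (apply pow_le; lra).
    assert (r * r ^ N <= r * 1)%R by (apply Rmult_le_compat_l; lra).
    rewrite Rmult_comm. apply Rmult_le_compat_r; lra. }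
  assert (Hne : forall N, 1 - b * q ^ N <> 0).
  { intros [|N].
    - change (q ^ 0) with (RtoC 1). rewrite Cmult_1_r. intros E. apply Hb. symmetry. apply Cminus_eq0. exact E.
    - apply neq1. specialize (Hsmall N). lra. }
  assert (Iter : forall N PN, lim_r (Psi (b * q ^ N) q) PN ->
            b * q ^ N / (1 - b * q ^ N) - PN = q ^ N * qpoch b q N * G0).
  { induction N; intros PN HPN.
    - change (q ^ 0) with (RtoC 1) in *. rewrite Cmult_1_r in *.
      assert (PN = P0) by (apply (lim_r_unique (Psi b q)); auto). subst PN.
      unfold G0. simpl. ring.
    - destruct (Psi_lim (b * q ^ N) q Hq (Hx N)) as [PN' HPN'].
      assert (IH := IHN PN' HPN').
      assert (Exq : b * q ^ N * q = b * q ^ S N) by (simpl; ring).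
      rewrite <- Exq in HPN.
      assert (HF := Psi_func (b * q ^ N) q PN' PN Hq (Hx N) HPN' HPN).
      rewrite HF, <- Exq, qpoch_S. change (q ^ S N) with (q * q ^ N).
      replace (q * q ^ N * (qpoch b q N * (1 - b * q ^ N)) * G0)
        with (q * (1 - b * q ^ N) * (q ^ N * qpoch b q N * G0)) by ring.
      rewrite <- IH.
      assert (H1 := Hne N). assert (H2 := Hne (S N)). rewrite <- Exq in H2.
      field. auto. }
  set (C1 := ((1 + KR r / (1 - r)) / (1 - r * Cmod b))%R).
  assert (HK : (0 < KR r)%R) by apply exp_pos.
  assert (Est : forall m, (Cmod (qpoch b q (S m) * G0 - b * qq) <= C1 * (Cmod b * Cmod b) * r ^ (S m))%R).
  { intros m. set (N := S m).
    destruct (Psi_lim (b * q ^ N) q Hq (Hx N)) as [PN HPN].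
    assert (IN := Iter N PN HPN).
    set (x := b * q ^ N) in *.
    set (s := Cmod x).
    assert (Hs : (s <= r * Cmod b)%R) by apply Hsmall.
    assert (Hs0 : (0 <= s)%R) by apply Cmod_ge_0.
    assert (Hss : (s = Cmod b * r ^ N)%R) by (unfold s, x; rewrite Cmod_mult, Cmod_pow; reflexivity).
    assert (HE := Psi_est x q qq PN Hq ltac:(fold s; lra) Hqq HPN). fold r s in HE.
    assert (Hn1 : 1 - x <> 0) by (apply neq1; fold s; lra).
    assert (Hm1 := one_minus_ge x). fold s in Hm1.
    assert (HA : (Cmod (x / (1 - x) - x) <= s * s / (1 - s))%R).
    { replace (x / (1 - x) - x) with (x * x / (1 - x)) by (field; auto).
      rewrite Cmod_div by auto. rewrite Cmod_mult. fold s.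
      unfold Rdiv. apply Rmult_le_compat_l; [nra|]. apply Rinv_le_contravar; lra. }
    assert (HX : q ^ N * (qpoch b q N * G0 - b * qq) = (x / (1 - x) - x) - (PN - x * (1 - qq))).
    { replace (q ^ N * (qpoch b q N * G0 - b * qq)) with (q ^ N * qpoch b q N * G0 - x * qq) by (unfold x; ring).
      rewrite <- IN. ring. }
    assert (Hb2 : (s * s / (1 - s) <= s * s / (1 - r * Cmod b))%R).
    { unfold Rdiv. apply Rmult_le_compat_l; [nra|]. apply Rinv_le_contravar; lra. }
    assert (Htot : (r ^ N * Cmod (qpoch b q N * G0 - b * qq) <= C1 * (s * s))%R).
    { replace (r ^ N)%R with (Cmod (q ^ N)) by (rewrite Cmod_pow; reflexivity).
      rewrite <- Cmod_mult, HX.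
      eapply Rle_trans; [apply Cmod_triangle|]. rewrite Cmod_opp.
      replace (KR r * (s ^ 2 / (1 - s)) / (1 - r))%R with (KR r / (1 - r) * (s * s / (1 - s)))%R in HE
        by (simpl; field; split; lra).
      assert (KR r / (1 - r) * (s * s / (1 - s)) <= KR r / (1 - r) * (s * s / (1 - r * Cmod b)))%R.
      { apply Rmult_le_compat_l; [|lra]. apply Rdiv_le_0_compat; lra. }
      assert (E : (C1 * (s * s) = s * s / (1 - r * Cmod b) + KR r / (1 - r) * (s * s / (1 - r * Cmod b)))%R)
        by (unfold C1; field; split; lra).
      lra. }
    rewrite Hss in Htot.
    assert (HrN : (0 < r ^ N)%R) by (apply pow_lt; lra).
    apply Rmult_le_reg_l with (r ^ N)%R; [lra|].
    replace (r ^ N * (C1 * (Cmod b * Cmod b) * r ^ N))%R with (C1 * (Cmod b * r ^ N * (Cmod b * r ^ N)))%R by ring.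
    exact Htot. }
  assert (L1 : lim_r (fun m => qpoch b q (S m) * G0) (b * qq)).
  { apply (lim_r_of_geo _ _ (C1 * (Cmod b * Cmod b) * r) r); [lra|].
    intros m. eapply Rle_trans; [apply Est|]. right. simpl. ring. }
  assert (L2 : lim_r (fun m => qpoch b q (S m) * G0) (bq * G0)).
  { apply (lim_r_ext (fun m => G0 * qpoch b q (m + 1)%nat)).
    - intros m. rewrite Nat.add_1_r. ring.
    - replace (bq * G0) with (G0 * bq) by ring.
      apply (lim_r_shift (fun n => G0 * qpoch b q n)). now apply lim_r_scal. }
  symmetry. apply (lim_r_unique _ _ _ L1 L2).
Qed.

Theorem theorem1p2 (b q : C) :
  b <> 1 ->
  (Cmod q < 1)%R -> (Cmod q * Cmod b < 1)%R ->
  exists qq bq : C,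
    (* qq = (q;q)_oo and bq = (b;q)_oo as limits of finite products *)
    cv_C (fun n => qpoch q q n) qq /\
    cv_C (fun n => qpoch b q n) bq /\
    cv_C (fun n => geom_sum b n - a_seq b q n) (b / (1 - b) - b * qq / bq) /\
    cv_C (fun n => (b - b ^ (S n)) / (1 - b) - a_seq b q n)
         (b / (1 - b) - b * qq / bq).
Proof.
  intros Hb Hq Hqb.
  assert (Hb1 : 1 - b <> 0) by (intros E; apply Hb; symmetry; apply Cminus_eq0; exact E).
  destruct (qpoch_lim q q Hq) as [qq Hqq]. destruct (qpoch_lim b q Hq) as [bq Hbq].
  destruct (Psi_lim b q Hq Hqb) as [P0 HP0].
  assert (Hq0 := Cmod_ge_0 q). assert (Hb0 := Cmod_ge_0 b).
  assert (Hbq0 : bq <> 0).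
  { apply (lim_nonzero b q bq Hq); auto. intros [|j].
    - change (q ^ 0) with (RtoC 1). rewrite Cmult_1_r. auto.
    - intros E.
      assert (Hlt : (Cmod (b * q ^ S j) < 1)%R).
      { rewrite Cmod_mult, Cmod_pow. change (Cmod q ^ S j)%R with (Cmod q * Cmod q ^ j)%R.
        assert (Cmod q ^ j <= 1)%R by (apply pow_le1; lra).
        assert (0 <= Cmod q ^ j)%R by (apply pow_le; lra).
        assert (Cmod q * Cmod q ^ j <= Cmod q * 1)%R by (apply Rmult_le_compat_l; lra).
        assert (Cmod b * (Cmod q * Cmod q ^ j) <= Cmod b * Cmod q)%R by (apply Rmult_le_compat_l; lra).
        lra. }
      rewrite E, Cmod_1 in Hlt. lra. }
  assert (Key : bq * (b / (1 - b) - P0) = b * qq).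
  { destruct (classic (q = 0)) as [E|E].
    - subst q. apply key_q0; auto.
    - apply (key_qnz b q); auto. }
  assert (HP : P0 = b / (1 - b) - b * qq / bq).
  { rewrite <- Key. field. auto. }
  exists qq, bq. rewrite <- HP. split; [|split; [|split]].
  - apply lim_r_cv. exact Hqq.
  - apply lim_r_cv. exact Hbq.
  - apply lim_r_cv. exact HP0.
  - apply lim_r_cv. apply (lim_r_ext (Psi b q)); auto. intros n. unfold Psi. f_equal.
    replace (b - b ^ S n) with ((1 - b) * geom_sum b n) by (rewrite geom_id; ring).
    field. auto.
Qed.
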